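(* Let $a\in C(\mathbb{R};\ell^{2}(\mathbb{Z}^{d}))$, $a(t,y)=\sum_{n}a_{n}(t)e^{in\cdot y}$, where $(a_n)$ is a (differentiable in time) solution of the system: for $n\in\bigcup_{\alpha\geq\alpha_{0}}\mathscr{C}_{\alpha}$, \[ i\partial_{t}a_{n}=2\sum_{(n_{1},n_{2},n_{3})\in\Lambda^{(1)}(n)}e^{it\Omega(\vec{n})}a_{n_{1}}\overline{a_{n_{2}}}a_{n_{3}}, \] and $i\partial_{t}a_{n}=0$ for all other $n\in\mathbb{Z}^d$. Then for every $\alpha\geq\alpha_{0}$, $\frac{d}{dt}\|\pi_{\alpha}a(t)\|_{\ell^{2}}^{2}=0$.
   Context: $\mathrm{A}$ is a real symmetric positive definite $d\times d$ matrix, $\lambda_{n}^{2}=n^{\intercal}\mathrm{A}n$, $|n|$ Euclidean norm, $\Omega(\vec{n})=\lambda_{n_{1}}^{2}-\lambda_{n_{2}}^{2}+\lambda_{n_{3}}^{2}-\lambda_{n}^{2}$ for $\vec n=(n_1,n_2,n_3,n)$. By a known result (Berti–Maspero), there exist $c(d)\in(0,2]$, $C(\mathrm{A},d)\geq2$ and a partition $(\mathscr{C}_{\alpha})_{\alpha\geq0}$ of $\mathbb{Z}^{d}$ with (i) $0\in\mathscr{C}_{0}$, $\max_{\mathscr{C}_{0}}|n|\leq C(\mathrm{A},d)$; (ii) $\max_{\mathscr{C}_{\alpha}}|n|\leq2\min_{\mathscr{C}_{\alpha}}|n|$ for $\alpha\geq1$; (iii) for $n_{1}\in\mathscr{C}_{\alpha_{1}},n_{2}\in\mathscr{C}_{\alpha_{2}}$,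 $\alpha_{1}\neq\alpha_{2}$: $|n_{1}-n_{2}|+|\lambda_{n_{1}}^{2}-\lambda_{n_{2}}^{2}|>(|n_{1}|+|n_{2}|)^{c(d)}$; such a partition is fixed. $K_{\alpha}=\min_{n\in\mathscr{C}_{\alpha}}|n|$ for $\alpha\geq1$, $\alpha_{0}=\min\{\alpha\geq1:K_{\alpha}\geq10^{10}C(\mathrm{A},d)\}$. For $n\in\mathscr{C}_{\alpha}$, $\alpha\geq\alpha_0$: $\Lambda^{(1)}(n)=\{(n_{1},n_{2},n_{3}): n_{1}-n_{2}+n_{3}=n,\ |\Omega(\vec n)|<1,\ n_{1}\in\mathscr{C}_{\alpha},\ |n_{2}|,|n_{3}|<10^{-5}K_{\alpha}\}$. For $u=\sum u_n e^{in\cdot y}$: $\pi_{\alpha}u=\sum_{n\in\mathscr{C}_{\alpha}}u_{n}e^{in\cdot y}$, $\|u\|_{\ell^{2}}=(\sum|u_{n}|^{2})^{1/2}$. *)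

(* Defs.v *)
From Stdlib Require Import Reals.
From Coquelicot Require Import Coquelicot.
From mathcomp Require Import all_boot all_order all_algebra.
From mathcomp Require Import Rstruct.
Local Open Scope R_scope.

Set Implicit Arguments.
Unset Strict Implicit.
Unset Printing Implicit Defensive.

Definition latt (d : nat) := 'rV[int]_d.

Definition toR (d : nat) (n : latt d) : 'rV[R]_d := map_mx (fun z : int => (z%:~R)%R) n.

Definition normZ (d : nat) (n : latt d) : R :=
  sqrt (\big[Rplus/0]_(i < d) (((toR n) ord0 i) * ((toR n) ord0 i))).

Definition lam2 (d : nat) (A : 'M[R]_d) (n : latt d) : R :=
  ((toR n *m A *m (toR n)^T)%R ord0 ord0).

Definition sym_posdef (d : nat) (A : 'M[R]_d) : Prop :=
  (A^T)%R = A /\ (forall v : 'rV[R]_d, v != 0%R -> 0 < (v *m A *m v^T)%R ord0 ord0).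

Definition Omega (d : nat) (A : 'M[R]_d) (n1 n2 n3 n : latt d) : R :=
  lam2 A n1 - lam2 A n2 + lam2 A n3 - lam2 A n.

Definition expi (th : R) : C := (cos th, sin th).

(* Lambda^(1)(n), given the class index map [cls] and the minima [K] *)
Definition Lambda1 (d : nat) (A : 'M[R]_d) (cls : latt d -> nat) (K : nat -> R)
  (n : latt d) (x : latt d * latt d * latt d) : Prop :=
  let: (n1, n2, n3) := x in
  (n1 - n2 + n3)%R = n /\ Rabs (Omega A n1 n2 n3 n) < 1 /\ cls n1 = cls n /\
  normZ n2 < / 10 ^ 5 * K (cls n) /\ normZ n3 < / 10 ^ 5 * K (cls n).

(* a in C(R; l^2(Z^d)): a(t) is in l^2 for each t (finite partial sums of |a_n|^2 bounded),
   and t |-> a(t) is continuous for the l^2 norm. *)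
Definition in_C_l2 (d : nat) (a : latt d -> R -> C) : Prop :=
  (forall t : R, exists M : R, forall s : seq (latt d), uniq s ->
      \big[Rplus/0]_(n <- s) (Cmod (a n t) ^ 2) <= M) /\
  (forall (t eps : R), 0 < eps -> exists del : R, 0 < del /\
      forall t' : R, Rabs (t' - t) < del -> forall s : seq (latt d), uniq s ->
        \big[Rplus/0]_(n <- s) (Cmod (Cminus (a n t') (a n t)) ^ 2) <= eps).

(* Main.v *)
Require Import Defs.
From Stdlib Require Import Reals Lra ClassicalEpsilon.
From Coquelicot Require Import Coquelicot.
From mathcomp Require Import all_boot all_order all_algebra.
From mathcomp Require Import Rstruct zify.
Open Scope R_scope.

Lemma is_derive_Re (f : R -> C) x l :
  is_derive f x l -> is_derive (fun t => fst (f t)) x (fst l).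
Proof.
intros H. unfold is_derive in *.
eapply filterdiff_ext_lin.
- eapply filterdiff_comp; [exact H | apply filterdiff_linear, is_linear_fst].
- intros y; reflexivity.
Qed.

Lemma is_derive_Im (f : R -> C) x l :
  is_derive f x l -> is_derive (fun t => snd (f t)) x (snd l).
Proof.
intros H. unfold is_derive in *.
eapply filterdiff_ext_lin.
- eapply filterdiff_comp; [exact H | apply filterdiff_linear, is_linear_snd].
- intros y; reflexivity.
Qed.

Lemma is_derive_eq (f : R -> R) x l l' : is_derive f x l -> l = l' -> is_derive f x l'.
Proof. intros H <-; exact H. Qed.

Lemma deriv_sum (I : Type) (s : seq I) (a da : I -> R -> C) t :
  (forall n, is_derive (a n) t (da n t)) ->
  is_derive (fun t' => \big[Rplus/0]_(n <- s) Cmod (a n t') ^ 2) t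
    (\big[Rplus/0]_(n <- s) (2 * (fst (a n t) * fst (da n t) + snd (a n t) * snd (da n t)))).
Proof.
intros hd. elim: s => [|n s IH].
- rewrite big_nil. apply (is_derive_ext (fun _ => 0)).
  + intros t'; rewrite big_nil; reflexivity.
  + exact (is_derive_const 0 t).
- rewrite big_cons. eapply is_derive_ext.
  + intros t'; rewrite big_cons; reflexivity.
  + apply: (is_derive_plus (fun t' => Cmod (a n t') ^ 2)); last exact IH.
    eapply is_derive_ext. { intros t'; rewrite Cmod2_alt; reflexivity. }
    eapply is_derive_eq.
    * apply: is_derive_plus; apply: is_derive_pow;
        [apply: is_derive_Re | apply: is_derive_Im]; apply hd.
    * rewrite /plus /=. change (INR 2 * fst (da n t) * fst (a n t) ^ 1 + INR 2 * snd (da n t) * snd (a n t) ^ 1 = 2 * (fst (a n t) * fst (da n t) + snd (a n t) * snd (da n t))). simpl; ring.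
Qed.
Module Fin.
Import GRing.Theory Num.Theory Order.TTheory.

Lemma coord_le d (n : latt d) i : Rabs ((n ord0 i)%:~R)%R <= normZ n.
Proof.
have E : toR n ord0 i = ((n ord0 i)%:~R)%R by rewrite mxE.
rewrite -E. unfold normZ.
rewrite -sqrt_Rsqr_abs. apply sqrt_le_1_alt.
have : 0 <= \big[Rplus/0]_(j < d | j != i) (toR n ord0 j * toR n ord0 j).
  apply: (big_ind (fun x => 0 <= x)); [lra| intros; lra| intros; apply Rle_0_sqr].
move=> H0; rewrite [X in _ <= X](bigD1 i) //=. have := Rplus_le_compat_l (toR n ord0 i * toR n ord0 i) _ _ H0. rewrite Rplus_0_r. exact.
Qed.

Lemma int_bound (z : int) (N : nat) : Rabs (z%:~R)%R <= INR N -> (`|z| <= N)%N.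
Proof.
rewrite RabsE (RealsE.1.1.1.1.1.1.1.1.1.1.1.1.2) => /RleP.
rewrite -intr_norm -natr_absz. rewrite ler_nat. done.
Qed.

Lemma finite_bounded d (B : R) (P : latt d -> bool) :
  (forall n, P n -> normZ n <= B) -> exists s, uniq s /\ forall n, n \in s <-> P n.
Proof.
move=> hB.
have [N HN] : exists N : nat, B <= INR N.
  destruct (INR_unbounded B) as [N HN]; exists N; lra.
pose L : seq (latt d) := [seq ((\row_i ((f i : nat)%:Z - N%:Z))%R : latt d) | f : {ffun 'I_d -> 'I_(N + N).+1} <- enum {ffun 'I_d -> 'I_(N + N).+1}].
exists (undup (filter P L)). split; first exact: undup_uniq.
move=> n; rewrite mem_undup mem_filter; split; first by case/andP.
move=> Pn; rewrite Pn /=.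
have hc : forall i, (`|n ord0 i| <= N)%N.
  move=> i; apply: int_bound. eapply Rle_trans; [apply coord_le|]. eapply Rle_trans; [apply hB, Pn| exact HN].
apply/mapP. exists [ffun i => inord (`|(n ord0 i + N%:Z)%R|%N) : 'I_(N+N).+1].
  by rewrite mem_enum.
apply/rowP => j. rewrite !mxE ffunE inordK.
- have := hc j. move: (n ord0 j) => z. lia.
- have := hc j. move: (n ord0 j) => z. lia.
Qed.
End Fin.
Import Fin.

Lemma key (a da W : C) : Cmult Ci da = Cmult (RtoC 2) W ->
  fst a * fst da + snd a * snd da = 2 * Im (Cmult (Cconj a) W).
Proof.
destruct a as [x y], da as [p q], W as [u v].
unfold Cmult, Ci, RtoC, Cconj, Im; simpl. intros H; injection H; intros H1 H2.
assert (p = 2 * v) by nra. assert (q = - (2 * u)) by nra. subst. ring.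
Qed.

Lemma Im_sum (I : Type) (c : C) (s : seq I) (F : I -> C) :
  Im (Cmult c (\big[Cplus/RtoC 0]_(x <- s) F x)) = \big[Rplus/0]_(x <- s) Im (Cmult c (F x)).
Proof.
elim: s => [|x s IH].
- rewrite !big_nil. destruct c; unfold Im, Cmult, RtoC; simpl; ring.
- rewrite !big_cons -IH. destruct c, (F x), (\big[Cplus/RtoC 0]_(j <- s) F j).
  unfold Im, Cmult, Cplus; simpl; ring.
Qed.

Lemma big_scal (I : Type) (c : R) (s : seq I) (F : I -> R) :
  \big[Rplus/0]_(i <- s) (c * F i) = c * \big[Rplus/0]_(i <- s) F i.
Proof. elim: s => [|x s IH]; rewrite ?big_nil ?big_cons; [ring| rewrite IH; ring]. Qed.

Lemma big_opp (I : Type) (s : seq I) (F : I -> R) :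
  \big[Rplus/0]_(i <- s) (- F i) = - \big[Rplus/0]_(i <- s) F i.
Proof. elim: s => [|x s IH]; rewrite ?big_nil ?big_cons; [ring| rewrite IH; ring]. Qed.

Lemma Omega_swap d (A : 'M[R]_d) n1 n2 n3 n : Omega A n n3 n2 n1 = - Omega A n1 n2 n3 n.
Proof. unfold Omega; ring. Qed.
Theorem lemma2p9
  (d : nat) (A : 'M[R]_d) (hA : sym_posdef A)
  (* constants c(d), C(A,d) and the fixed partition (C_alpha), C_alpha = {n | cls n = alpha} *)
  (c Cc : R) (cls : latt d -> nat)
  (hc : 0 < c <= 2) (hCc : 2 <= Cc)
  (hP0 : cls 0%R = 0%N)
  (hP1 : forall n : latt d, cls n = 0%N -> normZ n <= Cc)
  (hP2 : forall (al : nat) (n m : latt d), (1 <= al)%N -> cls n = al -> cls m = al ->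
           normZ n <= 2 * normZ m)
  (hP3 : forall n1 n2 : latt d, cls n1 <> cls n2 ->
           normZ (n1 - n2)%R + Rabs (lam2 A n1 - lam2 A n2) >
              Rpower (normZ n1 + normZ n2) c)
  (* K_alpha = min_{n in C_alpha} |n| for alpha >= 1 *)
  (K : nat -> R)
  (hK : forall al : nat, (1 <= al)%N ->
          (exists n : latt d, cls n = al /\ normZ n = K al) /\
          (forall n : latt d, cls n = al -> K al <= normZ n))
  (* alpha_0 = min { alpha >= 1 : K_alpha >= 10^10 C(A,d) } *)
  (al0 : nat) (hal0 : (1 <= al0)%N) (hKal0 : 10 ^ 10 * Cc <= K al0)
  (hal0min : forall al : nat, (1 <= al)%N -> (al < al0)%N -> K al < 10 ^ 10 * Cc)
  (* the solution and its time derivative *)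
  (a da : latt d -> R -> C)
  (ha : in_C_l2 a)
  (hda : forall (n : latt d) (t : R), is_derive (a n) t (da n t))
  (hsys : forall (n : latt d) (t : R), (al0 <= cls n)%N ->
     exists s : seq (latt d * latt d * latt d), uniq s /\
       (forall x, x \in s <-> Lambda1 A cls K n x) /\
       Cmult Ci (da n t) =
         Cmult (RtoC 2) (\big[Cplus/RtoC 0]_(x <- s)
            (let: (n1, n2, n3) := x in
             Cmult (Cmult (Cmult (expi (t * Omega A n1 n2 n3 n)) (a n1 t))
                          (Cconj (a n2 t))) (a n3 t))))
  (hrest : forall (n : latt d) (t : R), (cls n < al0)%N -> Cmult Ci (da n t) = RtoC 0) :
  forall al : nat, (al0 <= al)%N ->
    exists s : seq (latt d), uniq s /\ (forall n, n \in s <-> cls n = al) /\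
      forall t : R,
        is_derive (fun t' : R => \big[Rplus/0]_(n <- s) Cmod (a n t') ^ 2) t 0.
Proof.
move=> al Hal.
have Hal1 : (1 <= al)%N by exact: leq_trans hal0 Hal.
destruct (hK al Hal1) as [[m0 [Hm0 Km0]] _].
destruct (@finite_bounded d (2 * K al) (fun n => cls n == al)) as [s [us Hs]].
{ move=> n /eqP Hn. rewrite -Km0. apply: (hP2 al); auto. }
exists s. split; first exact us. split.
{ move=> n; rewrite Hs; split; [move/eqP|move=>->]; done. }
move=> t.
eapply is_derive_eq; first (apply deriv_sum; intros n; apply hda).
pose Tm (n : latt d) (x : latt d * latt d * latt d) :=
  (let: (n1, n2, n3) := x in
             Cmult (Cmult (Cmult (expi (t * Omega A n1 n2 n3 n)) (a n1 t))
                          (Cconj (a n2 t))) (a n3 t)).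
have hS : forall n, exists s0 : seq (latt d * latt d * latt d), (al0 <= cls n)%N ->
   uniq s0 /\ (forall x, x \in s0 <-> Lambda1 A cls K n x) /\
   Cmult Ci (da n t) = Cmult (RtoC 2) (\big[Cplus/RtoC 0]_(x <- s0) Tm n x).
{ move=> n. case: (boolP (al0 <= cls n)%N) => hh.
  - have [s0 H] := hsys n t hh. exists s0 => _; exact H.
  - by exists [::]. }
pose S n := proj1_sig (constructive_indefinite_description _ (hS n)).
have HS : forall n, (al0 <= cls n)%N -> uniq (S n) /\ (forall x, x \in S n <-> Lambda1 A cls K n x) /\
   Cmult Ci (da n t) = Cmult (RtoC 2) (\big[Cplus/RtoC 0]_(x <- S n) Tm n x).
{ move=> n; exact: (proj2_sig (constructive_indefinite_description _ (hS n))). }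
pose h (q : latt d * (latt d * latt d * latt d)) := Im (Cmult (Cconj (a q.1 t)) (Tm q.1 q.2)).
have clsS : forall n, n \in s -> cls n = al by move=> n /Hs /eqP.
transitivity (4 * \big[Rplus/0]_(n <- s) \big[Rplus/0]_(x <- S n) h (n, x)).
{ rewrite -big_scal. apply: eq_big_seq => n ns.
  have cn := clsS n ns.
  have [_ [_ E]] := HS n ltac:(by rewrite cn).
  rewrite (key _ _ _ E) Im_sum /h /=. ring. }
pose Q := [seq (n, x) | n <- s, x <- S n].
have -> : \big[Rplus/0]_(n <- s) \big[Rplus/0]_(x <- S n) h (n, x) = \big[Rplus/0]_(q <- Q) h q
  by rewrite big_allpairs_dep.
suff HQ : \big[Rplus/0]_(q <- Q) h q = 0 by rewrite HQ; apply Rmult_0_r.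
pose sig (q : latt d * (latt d * latt d * latt d)) : latt d * (latt d * latt d * latt d) :=
  (q.2.1.1, (q.1, q.2.2, q.2.1.2)).
have sigK : involutive sig by case=> n [[n1 n2] n3].
have memQ : forall q, q \in Q <-> (cls q.1 = al /\ Lambda1 A cls K q.1 q.2).
{ move=> q; split.
  - case/allpairsPdep => n [x [ns xs ->]] /=.
    have cn := clsS n ns. split; first exact cn.
    have [_ [Hm _]] := HS n ltac:(by rewrite cn). by apply/Hm.
  - case=> cq Lq. apply/allpairsPdep. exists q.1, q.2. split.
    + by apply/Hs; apply/eqP.
    + have [_ [Hm _]] := HS q.1 ltac:(by rewrite cq). by apply/Hm.
    + by case: q {cq Lq}. }
have memsig : forall q, q \in Q -> sig q \in Q.
{ case=> n [[n1 n2] n3] /memQ /= [cn [E [HO [c1 [h2 h3]]]]].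
  apply/memQ => /=. split; first by rewrite c1.
  split; last split; last split; last split.
  - by rewrite -E GRing.addrK GRing.subrK.
  - by rewrite Omega_swap Rabs_Ropp.
  - by rewrite c1.
  - by rewrite c1.
  - by rewrite c1. }
have uQ : uniq Q.
{ apply: allpairs_uniq_dep => //.
  - move=> n ns. have [U _] := HS n ltac:(by rewrite (clsS n ns)). exact U.
  - move=> [n1 x1] [n2 x2] _ _ /= [-> ->]. by []. }
have pQ : perm_eq Q (map sig Q).
{ apply: uniq_perm => //. - by rewrite (map_inj_uniq (can_inj sigK)).
  - move=> q. rewrite -{2}(sigK q) (mem_map (can_inj sigK)).
    apply/idP/idP; first exact: memsig. by move/memsig; rewrite sigK. }
have hsig : forall q, h (sig q) = - h q.
{ case=> n [[n1 n2] n3]. rewrite /h /Tm /=. rewrite Omega_swap.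
  unfold expi. rewrite -Ropp_mult_distr_r cos_neg sin_neg.
  destruct (a n t), (a n1 t), (a n2 t), (a n3 t).
  unfold Im, Cmult, Cconj; simpl. ring. }
have : \big[Rplus/0]_(q <- Q) h q = - \big[Rplus/0]_(q <- Q) h q.
{ rewrite {1}(perm_big _ pQ) big_map -big_opp. apply: eq_bigr => q _. exact: hsig. }
lra.
Qed.
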